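(* Let $f:\mathbb{R}^n\to\mathbb{R}$ be convex and $L$-smooth for some $L>0$, and suppose $f$ has a minimizer $x^\star\in\mathbb{R}^n$. Let $\{x^k\}$ be generated by APBM with models $\hat f^k$ satisfying, for every $k\ge1$: (a) $\hat f^k$ is convex; (b) $\hat f^k(x)\ge f(y^k)+\langle\nabla f(y^k),x-y^k\rangle$ for all $x\in\mathbb{R}^n$; (c) $\hat f^k(x)\le f(x)$ for all $x\in\mathbb{R}^n$. Then for every $k\ge0$, $$f(x^k)-f(x^\star)\le\frac{2L\|x^0-x^\star\|^2}{(k+1)^2}.$$
   Context: APBM (accelerated proximal bundle method) for minimizing $f$: given $L>0$ and an initial point $x^0\in\mathbb{R}^n$, set $y^1=x^0$ and $t_1=1$. For $k=1,2,\dots$, given a model $\hat f^k:\mathbb{R}^n\to\mathbb{R}$, set $x^k=\arg\min_{x\in\mathbb{R}^n}\ \hat f^k(x)+\frac{L}{2}\|x-y^k\|^2$, $t_{k+1}=\frac{1+\sqrt{1+4t_k^2}}{2}$, $y^{k+1}=x^k+\frac{t_k-1}{t_{k+1}}(x^k-x^{k-1})$. A differentiable $f$ is $L$-smooth if $\|\nabla f(x)-\nabla f(y)\|\le L\|x-y\|$ for all $x,y\in\mathbb{R}^n$ (Euclidean norm). *)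

(* Defs.v *)
From HB Require Import structures.
From mathcomp Require Import all_boot all_order all_algebra.
From mathcomp Require Import all_classical all_reals all_analysis.
Set Implicit Arguments. Unset Strict Implicit. Unset Printing Implicit Defensive.
Import Order.TTheory GRing.Theory Num.Theory.
Import numFieldNormedType.Exports.
Local Open Scope ring_scope.

Section Defs.
Variables (R : realType) (n : nat).

(* Euclidean inner product and norm on R^n (the library norm on 'rV is the max norm). *)
Definition dotv (u v : 'rV[R]_n) : R := \sum_(i < n) u ord0 i * v ord0 i.
Definition enorm (u : 'rV[R]_n) : R := Num.sqrt (dotv u u).

Definition convex_fun (f : 'rV[R]_n -> R) : Prop :=
  forall (x y : 'rV[R]_n) (t : R), 0 <= t -> t <= 1 ->
    f (t *: x + (1 - t) *: y) <= t * f x + (1 - t) * f y.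

Definition is_gradient (f : 'rV[R]_n -> R) (g : 'rV[R]_n -> 'rV[R]_n) : Prop :=
  forall x : 'rV[R]_n, differentiable f x /\ forall v : 'rV[R]_n, 'D_v f x = dotv (g x) v.

Definition L_smooth (L : R) (f : 'rV[R]_n -> R) (g : 'rV[R]_n -> 'rV[R]_n) : Prop :=
  is_gradient f g /\ forall x y, enorm (g x - g y) <= L * enorm (x - y).

Definition APBM (L : R) (fhat : nat -> 'rV[R]_n -> R)
    (x y : nat -> 'rV[R]_n) (t : nat -> R) : Prop :=
  [/\ y 1%N = x 0%N, t 1%N = 1 &
   forall k : nat, (1 <= k)%N ->
     [/\ (forall z, fhat k (x k) + L / 2 * enorm (x k - y k) ^+ 2
                     <= fhat k z + L / 2 * enorm (z - y k) ^+ 2),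
         t k.+1 = (1 + Num.sqrt (1 + 4 * t k ^+ 2)) / 2 &
         y k.+1 = x k + ((t k - 1) / t k.+1) *: (x k - x k.-1)]].

End Defs.

(* Main.v *)
Require Import Defs.
From HB Require Import structures.
From mathcomp Require Import all_boot all_order all_algebra.
From mathcomp Require Import all_classical all_reals all_analysis.
From mathcomp Require Import ring lra.
Import Order.TTheory GRing.Theory Num.Theory.
Import numFieldNormedType.Exports.
Local Open Scope ring_scope.


Section Alg.
Variables (R : realType) (n : nat).
Implicit Types (u v w : 'rV[R]_n).
Local Notation dot := (@dotv R n).

Lemma dotvC u v : dot u v = dot v u.
Proof. by apply: eq_bigr => i _; rewrite mulrC. Qed.
Lemma dotvDl u v w : dot (u + v) w = dot u w + dot v w.
Proof. by rewrite /dotv -big_split; apply: eq_bigr => i _; rewrite mxE mulrDl. Qed.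
Lemma dotvZl (a : R) u v : dot (a *: u) v = a * dot u v.
Proof. by rewrite /dotv mulr_sumr; apply: eq_bigr => i _; rewrite mxE mulrA. Qed.
Lemma dotvNl u v : dot (- u) v = - dot u v.
Proof. by rewrite -scaleN1r dotvZl mulN1r. Qed.
Lemma dotvBl u v w : dot (u - v) w = dot u w - dot v w.
Proof. by rewrite dotvDl dotvNl. Qed.
Lemma dotvDr u v w : dot w (u + v) = dot w u + dot w v.
Proof. by rewrite dotvC dotvDl !(dotvC w). Qed.
Lemma dotvZr (a : R) u v : dot v (a *: u) = a * dot v u.
Proof. by rewrite dotvC dotvZl dotvC. Qed.
Lemma dotvNr u v : dot v (- u) = - dot v u.
Proof. by rewrite dotvC dotvNl dotvC. Qed.
Lemma dotvBr u v w : dot w (u - v) = dot w u - dot w v.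
Proof. by rewrite dotvDr dotvNr. Qed.
Lemma dotv0l v : dot 0 v = 0.
Proof. by rewrite -(scale0r 0) dotvZl mul0r. Qed.
Lemma dotvv_ge0 u : 0 <= dot u u.
Proof. by apply: sumr_ge0 => i _; rewrite -expr2 sqr_ge0. Qed.
Lemma enorm2 u : enorm u ^+ 2 = dot u u.
Proof. by rewrite sqr_sqrtr // dotvv_ge0. Qed.
Lemma enorm_ge0 u : 0 <= enorm u.
Proof. exact: sqrtr_ge0. Qed.
Lemma dotvv0 u v : dot u u <= 0 -> dot u v = 0.
Proof.
move=> h; have e : dot u u == 0 by rewrite eq_le h dotvv_ge0.
have H : forall i, true -> u ord0 i * u ord0 i = 0.
  apply: psumr_eq0P; first by move=> i _; rewrite -expr2 sqr_ge0.
  exact/eqP.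
rewrite /dotv big1 // => i _.
have /eqP := H i isT; rewrite mulf_eq0 orbb => /eqP ->; by rewrite mul0r.
Qed.
End Alg.

Section Alg2.
Variables (R : realType) (n : nat).
Implicit Types (u v w : 'rV[R]_n).
Local Notation dot := (@dotv R n).
Lemma dotv_sqD u v : dot (u + v) (u + v) = dot u u + 2 * dot u v + dot v v.
Proof. rewrite dotvDl !dotvDr (@dotvC R n v u); ring. Qed.
Lemma dotv_sqB u v : dot (u - v) (u - v) = dot u u - 2 * dot u v + dot v v.
Proof. rewrite dotvBl !dotvBr (@dotvC R n v u); ring. Qed.
Lemma dotv_sqZ (a : R) u : dot (a *: u) (a *: u) = a ^+ 2 * dot u u.
Proof. rewrite dotvZl dotvZr; ring. Qed.
Lemma dotv_sqN u : dot (- u) (- u) = dot u u.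
Proof. by rewrite dotvNl dotvNr opprK. Qed.
End Alg2.
Arguments dotvC {R n}.
Arguments dotvDl {R n}.
Arguments dotvZl {R n}.
Arguments dotvNl {R n}.
Arguments dotvBl {R n}.
Arguments dotvDr {R n}.
Arguments dotvZr {R n}.
Arguments dotvNr {R n}.
Arguments dotvBr {R n}.
Arguments dotv0l {R n}.
Arguments dotvv_ge0 {R n}.
Arguments enorm2 {R n}.
Arguments enorm_ge0 {R n}.
Arguments dotvv0 {R n}.
Arguments dotv_sqD {R n}.
Arguments dotv_sqB {R n}.
Arguments dotv_sqZ {R n}.
Arguments dotv_sqN {R n}.


Section Desc.
Variables (R : realType) (n : nat).
Local Open Scope classical_set_scope.
Local Open Scope ring_scope.

Lemma line_derive (f : 'rV[R]_n -> R) g (a d : 'rV[R]_n) (s : R) : is_gradient f g ->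
  is_derive s (1:R) (fun r : R => f (r *: d + a)) (dotv (g (s *: d + a)) d).
Proof.
move=> /(_ (s *: d + a)) [df Dv].
have E : (fun h : R => h^-1 *: (((fun r : R => f (r *: d + a)) \o shift s) (h *: 1)
             - f (s *: d + a))) =
         (fun h : R => h^-1 *: ((f \o shift (s *: d + a)) (h *: d) - f (s *: d + a))).
  apply/funext => h /=; congr (_ *: (f _ - _)).
  rewrite /= scalerDl addrA; congr (_ *: _ + _ + _); exact: mulr1.
have dv : derivable f (s *: d + a) d by exact: diff_derivable.
split; first by rewrite /derivable E.
by rewrite /derive E -Dv.
Qed.

Lemma polyd (c k s : R) :
  is_derive s (1:R) (fun r : R => c * r + k * (r * r)) (c + k * (2 * s)).
Proof.
have H := is_deriveD (is_deriveZ c (is_derive_id s (1:R)))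
   (is_deriveZ k (is_deriveM (is_derive_id s (1:R)) (is_derive_id s (1:R)))).
apply: is_derive_eq.
change (c * 1 + k * (s * 1 + s * 1) = c + k * (2 * s)); ring.
Qed.

Lemma descent (f : 'rV[R]_n -> R) g L : 0 < L -> L_smooth L f g ->
  forall a d, f (d + a) <= f a + dotv (g a) d + L / 2 * dotv d d.
Proof.
move=> L0 [Hg Hlip] a d.
set c := dotv (g a) d; set q := dotv d d; set k := L / 2 * q.
pose psi := (fun r : R => f (r *: d + a)) - (fun r : R => c * r + k * (r * r)).
have Dpsi : forall s, is_derive s (1:R) psi
    (dotv (g (s *: d + a)) d - (c + k * (2 * s))).
  move=> s; have H1 := line_derive f g a d s Hg; have H2 := polyd c k s.
  exact: is_deriveB.
have dle : forall x, x \in `]0, 1[%R -> derive1 psi x <= 0.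
  move=> x; rewrite in_itv /= => /andP [x0 x1].
  rewrite derive1E (@derive_val _ _ _ _ _ _ _ (Dpsi x)).
  set w := g (x *: d + a) - g a.
  have e1 : dotv (g (x *: d + a)) d = dotv w d + c by rewrite /w dotvBl /c subrK.
  rewrite e1.
  have hw : enorm w <= L * enorm (x *: d).
    by have := Hlip (x *: d + a) a; rewrite addrK.
  have hw2 : dotv w w <= L ^+ 2 * (x ^+ 2 * q).
    rewrite -enorm2 -(dotv_sqZ x d) -enorm2 -exprMn.
    by apply: lerXn2r; rewrite ?nnegrE ?enorm_ge0 ?mulr_ge0 ?enorm_ge0 // ltW.
  have h0 := dotvv_ge0 (w - (L * x) *: d).
  rewrite dotv_sqB dotvZr dotv_sqZ -/q in h0.
  have Lx : 0 < L * x by rewrite mulr_gt0.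
  rewrite /k.
  have : L * x * (dotv w d - L * x * q) <= 0 by nra.
  by rewrite pmulr_rle0 //; nra.
have cont : {within `[0, 1], continuous psi}.
  apply: derivable_within_continuous => x _; exact: (@ex_derive _ _ _ _ _ _ _ (Dpsi x)).
have := @ler0_derive1_le_cc R psi 0 1 (fun x _ => @ex_derive _ _ _ _ _ _ _ (Dpsi x)) dle cont 1 0.
rewrite !in_itv /= lexx ler01 /= => /(_ (lexx _) isT isT).
change (f (1 *: d + a) - (c * 1 + k * (1 * 1)) <= f (0 *: d + a) - (c * 0 + k * (0 * 0)) -> f (d + a) <= f a + c + k).
rewrite scale1r scale0r add0r !mulr0 !mulr1 addr0 subr0.

rewrite /k; lra.
Qed.
End Desc.
Arguments descent {R n f g L}.


Lemma small_lim (R : realType) (A B : R) :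
  (forall s, 0 < s -> s <= 1 -> 0 <= A + s * B) -> 0 <= B -> 0 <= A.
Proof.
move=> H B0; case: (leP 0 A) => // A0.
have BA : 0 < B - A by lra.
set s := - A / (B - A).
have e : s * (B - A) = - A by rewrite /s mulfVK // gt_eqF.
have s0 : 0 < s by rewrite /s divr_gt0 // oppr_gt0.
have s1 : s <= 1 by rewrite /s ler_pdivrMr // mul1r; lra.
have := H s s0 s1; nra.
Qed.

Section Prox.
Variables (R : realType) (n : nat).
Local Notation dot := (@dotv R n).

Lemma prox_sc (h : 'rV[R]_n -> R) (L : R) (y x : 'rV[R]_n) : 0 < L -> convex_fun h ->
  (forall z, h x + L / 2 * enorm (x - y) ^+ 2 <= h z + L / 2 * enorm (z - y) ^+ 2) ->
  forall z, h x + L / 2 * dot (x - y) (x - y) + L / 2 * dot (z - x) (z - x)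
            <= h z + L / 2 * dot (z - y) (z - y).
Proof.
move=> L0 hc hmin z.
set A := h z - h x + L * dot (x - y) (z - x).
set B := L / 2 * dot (z - x) (z - x).
have HA : 0 <= A.
  apply: small_lim (_ : 0 <= B); last by rewrite mulr_ge0 ?dotvv_ge0 // divr_ge0 // ltW.
  move=> s s0 s1.
  have m := hmin (s *: z + (1 - s) *: x).
  have cv := hc z x s (ltW s0) s1.
  have ev : s *: z + (1 - s) *: x - y = (x - y) + s *: (z - x).
    by apply/rowP => i; rewrite !mxE; ring.
  rewrite !enorm2 ev (dotv_sqD (x - y)) dotv_sqZ dotvZr in m.
  have : 0 <= s * (A + s * B) by rewrite /A /B; nra.
  by rewrite pmulr_rge0.
have ez : z - y = (z - x) + (x - y) by rewrite addrA subrK.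
rewrite ez (dotv_sqD (z - x)) (dotvC (z - x)).
rewrite /A in HA; rewrite -subr_ge0; set D := dot (x - y) (z - x).
set Q1 := dot (z - x) (z - x); set Q2 := dot (x - y) (x - y).
suff -> : h z + L / 2 * (Q1 + 2 * D + Q2) - (h x + L / 2 * Q2 + L / 2 * Q1) = h z - h x + L * D by [].
by field.
Qed.
End Prox.
Arguments prox_sc {R n h L y x}.


Lemma tstep (R : realType) (T : R) : 1 <= T ->
  let t := (1 + Num.sqrt (1 + 4 * T ^+ 2)) / 2 in
  t ^+ 2 - t = T ^+ 2 /\ T + 1 / 2 <= t.
Proof.
move=> T1 t.
set r := Num.sqrt (1 + 4 * T ^+ 2).
have r0 : 0 <= r := sqrtr_ge0 _.
have r2 : r ^+ 2 = 1 + 4 * T ^+ 2 by rewrite sqr_sqrtr //; nra.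
split.
  rewrite /t; have -> : ((1 + r) / 2) ^+ 2 - (1 + r) / 2 = (r ^+ 2 - 1) / 4 by field.
  by rewrite r2; field.
have e : (r - 2 * T) * (r + 2 * T) = 1 by rewrite -[LHS]subr_sqr exprMn r2; ring.
have : 2 * T <= r.
  rewrite -subr_ge0; have p : 0 < r + 2 * T by lra.
  by rewrite -(pmulr_lge0 _ p) e.

move=> h; rewrite /t -/r; lra.
Qed.

Lemma gstar0 (R : realType) n (L : R) (f : 'rV[R]_n -> R) g xs :
  0 < L -> L_smooth L f g -> (forall z, f xs <= f z) -> forall v, dotv (g xs) v = 0.
Proof.
move=> L0 Hs hmin v; apply: dotvv0.
have := descent L0 Hs xs (- (1 / L) *: g xs).
have := hmin (- (1 / L) *: g xs + xs).
rewrite dotvZr dotv_sqZ; set G := dotv (g xs) (g xs) => h1 h2.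
have : 0 <= - (1 / L) * G + L / 2 * ((- (1 / L)) ^+ 2 * G) by lra.
have -> : - (1 / L) * G + L / 2 * ((- (1 / L)) ^+ 2 * G) = - (1 / (2 * L)) * G.
  by field; rewrite gt_eqF.
have p : 0 < 1 / (2 * L) by rewrite divr_gt0 // mulr_gt0.
by rewrite mulNr oppr_ge0 pmulr_rle0.
Qed.
Arguments gstar0 {R n L f g xs}.


Theorem corollary1 (R : realType) (n : nat) (L : R) (f : 'rV[R]_n -> R)
    (gradf : 'rV[R]_n -> 'rV[R]_n) (xstar : 'rV[R]_n)
    (fhat : nat -> 'rV[R]_n -> R) (x y : nat -> 'rV[R]_n) (t : nat -> R) :
  0 < L ->
  convex_fun f ->
  L_smooth L f gradf ->
  (forall z, f xstar <= f z) ->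
  APBM L fhat x y t ->
  (forall k : nat, (1 <= k)%N ->
     [/\ convex_fun (fhat k),
         (forall z, f (y k) + dotv (gradf (y k)) (z - y k) <= fhat k z) &
         (forall z, fhat k z <= f z)]) ->
  forall k : nat,
    f (x k) - f xstar <= 2 * L * enorm (x 0%N - xstar) ^+ 2 / (k.+1)%:R ^+ 2.
Proof.
move=> L0 fconv Hsm hmin [Hy1 Ht1 Hstep] Hmod.
set C := dotv (x 0%N - xstar) (x 0%N - xstar).
have C0 : 0 <= C := dotvv_ge0 _.
have P : forall k, (1 <= k)%N -> forall z,
    f (x k) + L / 2 * dotv (z - x k) (z - x k) <= f z + L / 2 * dotv (z - y k) (z - y k).
  move=> k k1 z; have [hmn _ _] := Hstep k k1; have [hc hb hu] := Hmod k k1.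
  have d := descent L0 Hsm (y k) (x k - y k); rewrite subrK in d.
  have := prox_sc L0 hc hmn z.
  have := hb (x k); have := hu z; lra.
have tf : forall m, 1 <= t m.+1 /\ (m.+2)%:R / 2 <= t m.+1.
  elim=> [|m [IH1 IH2]]; first by rewrite Ht1; split => //; lra.
  have [_ e _] := Hstep m.+1 isT.
  have [_ h] := @tstep _ _ IH1; rewrite e; split; first lra.
  by rewrite -[m.+3]addn1 natrD; lra.
pose u k := t k *: x k - (t k - 1) *: x k.-1 - xstar.
have inv : forall m, t m.+1 ^+ 2 * (f (x m.+1) - f xstar) + L / 2 * dotv (u m.+1) (u m.+1) <= L / 2 * C.
  elim=> [|m IH].
    have := P 1%N isT xstar; rewrite Hy1 /u Ht1 subrr scale0r subr0 scale1r expr1n mul1r.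
    rewrite -(opprB (x 1%N)) dotv_sqN -(opprB (x 0%N)) dotv_sqN -/C; lra.
  have [T1 _] := tf m.
  have [_ et ey] := Hstep m.+1 isT.
  set T := t m.+1 in T1 et ey IH *; set tt := t m.+2.
  have [e2 hT] := @tstep _ _ T1; rewrite -et -/tt in e2 hT.
  have tt0 : 0 < tt by lra.
  pose w := (1 / tt) *: xstar + (1 - 1 / tt) *: x m.+1.
  have tt1 : 1 <= tt by lra.
  have le1 : 1 / tt <= 1 by rewrite ler_pdivrMr // mul1r.
  have cv1 := fconv xstar (x m.+1) (1 / tt) (ltW (divr_gt0 ltr01 tt0)) le1.
  have Pk := P m.+2 isT w.
  have ew1 : w - y m.+2 = (- (1 / tt)) *: u m.+1.
    rewrite ey /w /u /= -/T -/tt; apply/rowP => i; rewrite !mxE; by field; rewrite ?gt_eqF.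
  have ew2 : w - x m.+2 = (- (1 / tt)) *: u m.+2.
    rewrite /w /u /= -/tt; apply/rowP => i; rewrite !mxE; by field; rewrite ?gt_eqF.
  rewrite ew1 ew2 !dotv_sqZ -/w in Pk.
  set F2 := f (x m.+2) in Pk *; set F1 := f (x m.+1) in IH cv1 *; set fs := f xstar in IH cv1 *.
  set fw := f w in Pk cv1.
  set U1 := dotv (u m.+1) (u m.+1) in Pk IH *; set U2 := dotv (u m.+2) (u m.+2) in Pk *.
  have tt2 : 0 < tt ^+ 2 by rewrite exprn_gt0.
  have M : tt ^+ 2 * F2 + L / 2 * U2 <= tt ^+ 2 * fw + L / 2 * U1.
    rewrite -(ler_pM2l tt2) in Pk.
    have E1 : tt ^+ 2 * (F2 + L / 2 * ((- (1 / tt)) ^+ 2 * U2)) = tt ^+ 2 * F2 + L / 2 * U2.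
      by field; rewrite gt_eqF.
    have E2 : tt ^+ 2 * (fw + L / 2 * ((- (1 / tt)) ^+ 2 * U1)) = tt ^+ 2 * fw + L / 2 * U1.
      by field; rewrite gt_eqF.
    by rewrite -E1 -E2.
  have cv' : tt ^+ 2 * fw <= tt * fs + T ^+ 2 * F1.
    rewrite -(ler_pM2l tt2) in cv1.
    have E : tt ^+ 2 * (1 / tt * fs + (1 - 1 / tt) * F1) = tt * fs + (tt ^+ 2 - tt) * F1.
      by field; rewrite gt_eqF.
    by rewrite -e2 -E.
  have ea : tt ^+ 2 * fs - tt * fs = T ^+ 2 * fs by rewrite -mulrBl e2.
  apply: (le_trans _ IH).
  have H := le_trans M (lerD cv' (lexx (L / 2 * U1))).
  have H2 := lerB H (lexx (tt ^+ 2 * fs)).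
  apply: (le_trans _ (le_trans H2 _)).
    by rewrite le_eqVlt; apply/orP; left; apply/eqP; ring.
  rewrite le_eqVlt; apply/orP; left; apply/eqP.
rewrite -e2; ring.
rewrite enorm2 -/C.
case=> [|m].
  have d := descent L0 Hsm xstar (x 0%N - xstar).
  rewrite subrK (gstar0 L0 Hsm hmin) -/C addr0 in d.
  rewrite expr1n divr1.
  have : 0 <= L * C by rewrite mulr_ge0 // ltW.
  move: d; set fs := f xstar; set LC := L * C.
  have -> : L / 2 * C = LC / 2 by rewrite /LC; field.
  have -> : 2 * L * C = 2 * LC by rewrite /LC; ring.
  lra.
have [T1 T2] := tf m; have I := inv m.
have U0 : 0 <= L / 2 * dotv (u m.+1) (u m.+1) by rewrite mulr_ge0 ?dotvv_ge0 // divr_ge0 // ltW.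
set T := t m.+1 in T1 T2 I; set K := (m.+2)%:R in T2 *.
have K0 : 0 < K by rewrite ltr0n.
set D := f (x m.+1) - f xstar in I *.
have I2 : T ^+ 2 * D <= L / 2 * C by lra.
rewrite ler_pdivlMr ?exprn_gt0 //.
have LC : 0 <= L * C by rewrite mulr_ge0 // ltW.
case: (leP D 0) => D0.
  have : D * K ^+ 2 <= 0 by rewrite mulr_le0_ge0 // sqr_ge0.
  move=> h; apply: (le_trans h); rewrite -mulrA mulr_ge0 //.
have KT : K ^+ 2 <= 4 * T ^+ 2.
  have : K <= 2 * T by lra.
  move=> h; have -> : 4 * T ^+ 2 = (2 * T) ^+ 2 by ring.
  rewrite !expr2; apply: ler_pM => //; rewrite ltW //.
apply: (le_trans (ler_wpM2l (ltW D0) KT)).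
have -> : D * (4 * T ^+ 2) = 4 * (T ^+ 2 * D) by ring.
have -> : 2 * L * C = 4 * (L / 2 * C) by field.
by rewrite ler_pM2l.
Qed.
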